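(* Let $\mathcal R$ be a commutative ring with unit, $L\in\mathbb N$ and $\vec m=(m_0,\dots,m_L)\in\mathcal R^{L+1}$. Then ${}_{\vec m}\mathcal H=({}_{\vec m}\mathcal H_n)_{n\ge0}$ satisfies the homotopy axiom if and only if the ideal of $\mathcal R$ generated by $\{m_0,\dots,m_L\}$ is all of $\mathcal R$ (i.e. there are $r_0,\dots,r_L\in\mathcal R$ with $\sum_k r_km_k=1_{\mathcal R}$). In particular, for $\mathcal R=\mathbb Z$ the homotopy axiom holds iff $\gcd(m_0,\dots,m_L)=1$.
   Context: For a space $X$: $\mathcal S_n(X)$ = continuous maps $[0,1]^n\to X$ ($[0,1]^0=\{0\}$), $\mathcal K_n(X)$ the free $\mathcal R$-module on $\mathcal S_n(X)$, $\mathcal K_{-1}(X)=0$. For $n\ge1$, $T\in\mathcal S_n(X)$, $0\le i\le L$, $1\le j\le n$: $\langle T\rangle_{n,i,j}(x_1,\dots,x_{n-1})=T(x_1,\dots,x_{j-1},i/L,x_j,\dots,x_{n-1})$ (for $n=1$: $\langle T\rangle_{1,i,1}(0)=T(i/L)$). ${}_{\vec m}\partial_n(T)=\sum_{j=1}^n(-1)^{j+1}\sum_{i=0}^Lm_i\langle T\rangle_{n,i,j}$, extended linearly, ${}_{\vec m}\partial_0=0$; this is a chain complex and ${}_{\vec m}\mathcal H_n(X)=\ker{}_{\vec m}\partial_n/\operatorname{im}{}_{\vec m}\partial_{n+1}$, a functor of $X$ via $\mathcal K_n(f)(T)=f\circ T$. The homotopy axiom means: for all homotopic continuous $f\simeq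 g:X\to Y$, ${}_{\vec m}\mathcal H_n(f)={}_{\vec m}\mathcal H_n(g)$ for all $n\ge0$. *)

(* Defs.v *)
From HB Require Import structures.
From mathcomp Require Import all_boot all_order all_algebra.
From mathcomp Require Import all_classical all_reals all_analysis.
From mathcomp Require Import Rstruct Rstruct_topology.
Set Implicit Arguments. Unset Strict Implicit. Unset Printing Implicit Defensive.
Import Order.TTheory GRing.Theory Num.Theory.
Local Open Scope classical_set_scope.
Local Open Scope ring_scope.

Notation RR := Rdefinitions.R.

Definition cube_set (n : nat) : set 'rV[RR]_n :=
  [set x | forall i : 'I_n, 0 <= x ord0 i <= 1].
Arguments cube_set : clear implicits.
Definition cube (n : nat) : topologicalType := @set_type _ (cube_set n).

(* All maps [0,1]^n -> X; the singular n-cubes S_n(X) are the continuous ones. *)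
Definition cubemap (n : nat) (X : topologicalType) := cube n -> X.
HB.instance Definition _ n X := gen_eqMixin (cubemap n X).
HB.instance Definition _ n X := gen_choiceMixin (cubemap n X).

Definition ins_row n (j : 'I_n.+1) (t : RR) (x : 'rV[RR]_n) : 'rV[RR]_n.+1 :=
  \row_(k < n.+1) match unlift j k with None => t | Some k' => x ord0 k' end.

Lemma ins_row_cube n (j : 'I_n.+1) (t : RR) (x : cube n) :
  0 <= t <= 1 -> ins_row j t (val x) \in cube_set n.+1.
Proof.
move=> ht; apply/mem_set => k; rewrite /ins_row mxE.
case: (unlift j k) => [k'|//]; case: x => y /= /set_mem; exact.
Qed.

Lemma frac_in01 (L : nat) (i : 'I_L.+1) : 0 <= (i%:R / L%:R : RR) <= 1.
Proof.
have Hi : (i <= L)%N by rewrite -ltnS.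
case: L i Hi => [|L] i Hi; first by rewrite invr0 mulr0 lexx ler01.
apply/andP; split; first by rewrite divr_ge0 // ler0n.
by rewrite ler_pdivrMr ?ltr0Sn // mul1r ler_nat.
Qed.

(* <T>_{n,i,j} with j 0-based: T(x_1,..,x_{j}, i/L, x_{j+1},..) *)
Definition face (L : nat) n X (T : cubemap n.+1 X) (i : 'I_L.+1) (j : 'I_n.+1)
  : cubemap n X :=
  fun x => T (exist _ (ins_row j (i%:R / L%:R) (val x))
                     (ins_row_cube j x (frac_in01 i))).

(* chains: finitely supported R-valued functions on S_n(X), i.e. elements of
   the free R-module K_n(X) on the continuous cubes *)
Definition supp (Rg : pzRingType) n X (c : cubemap n X -> Rg) : set (cubemap n X) :=
  [set T | c T != 0].
Definition is_chain (Rg : pzRingType) n X (c : cubemap n X -> Rg) : Prop :=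
  finite_set (supp c) /\ (forall T, supp c T -> continuous T).

(* boundary of a single cube: sum_j (-1)^(j+1) sum_i m_i <T>_{i,j} (1-based j) *)
Definition bd_cube (Rg : pzRingType) (L : nat) (m : 'I_L.+1 -> Rg) n X
  (T : cubemap n.+1 X) : cubemap n X -> Rg :=
  fun S => \sum_(j < n.+1) \sum_(i < L.+1)
            ((-1) ^+ j * m i) *+ (face T i j == S).

Definition bd (Rg : pzRingType) (L : nat) (m : 'I_L.+1 -> Rg) n X
  (c : cubemap n.+1 X -> Rg) : cubemap n X -> Rg :=
  fun S => \sum_(T \in supp c) c T * bd_cube m T S.

Definition is_cycle (Rg : pzRingType) (L : nat) (m : 'I_L.+1 -> Rg) n X :
  (cubemap n X -> Rg) -> Prop :=
  match n as k return (cubemap k X -> Rg) -> Prop with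
  | 0 => fun _ => True
  | k.+1 => fun c => forall S, bd m c S = 0
  end.

Definition push (Rg : pzRingType) n (X Y : topologicalType) (f : X -> Y)
  (c : cubemap n X -> Rg) : cubemap n Y -> Rg :=
  fun S => \sum_(T \in [set T | supp c T /\ (f \o T : cubemap n Y) = S]) c T.

Definition homotopic (X Y : topologicalType) (f g : X -> Y) : Prop :=
  exists H : X * set_type (`[0, 1] : set RR) -> Y,
    continuous H /\
    (forall x t, val t = 0 -> H (x, t) = f x) /\
    (forall x t, val t = 1 -> H (x, t) = g x).

(* Homotopy axiom: for all homotopic continuous f ~ g : X -> Y and all n,
   _mH_n(f) = _mH_n(g), i.e. for every n-cycle c, K_n(f)c - K_n(g)c is a
   boundary. *)
Definition homotopy_axiom (Rg : pzRingType) (L : nat) (m : 'I_L.+1 -> Rg) : Prop :=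
  forall (X Y : topologicalType) (f g : X -> Y),
    continuous f -> continuous g -> homotopic f g ->
    forall (n : nat) (c : cubemap n X -> Rg),
      is_chain c -> is_cycle m c ->
      exists d : cubemap n.+1 Y -> Rg,
        is_chain d /\ forall S, push f c S - push g c S = bd m d S.

(* Main.v *)
Require Import Defs.
From HB Require Import structures.
From mathcomp Require Import all_boot all_order all_algebra.
From mathcomp Require Import all_classical all_reals all_analysis.
From mathcomp Require Import Rstruct Rstruct_topology.
From mathcomp Require Import zify finmap lra ring.
Set Implicit Arguments. Unset Strict Implicit. Unset Printing Implicit Defensive.
Import Order.TTheory GRing.Theory Num.Theory.
Local Open Scope classical_set_scope.
Local Open Scope ring_scope.
Definition I01 : set RR := (`[0, 1] : set RR).
Definition clamp01 (t : RR) : RR := Num.min 1 (Num.max 0 t).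
Lemma clamp01_in t : clamp01 t \in I01.
Proof.
rewrite /clamp01; apply/mem_set; rewrite /I01 /= in_itv /=.
apply/andP; split.
  by rewrite le_min ler01 le_max lexx.
by rewrite ge_min lexx.
Qed.
Lemma clamp01_cont : continuous clamp01.
Proof.
move=> x.
have -> : clamp01 = ((fun=> 1 : RR^o) \min ((fun=> 0 : RR^o) \max (id : RR -> RR^o))).
  by apply/funext => t.
apply: continuous_min; first exact: cvg_cst.
apply: continuous_max; [exact: cvg_cst| exact: cvg_id].
Qed.

Definition tailv n (x : 'rV[RR]_n.+1) : 'rV[RR]_n := \row_(k < n) x ord0 (lift ord0 k).
Lemma tailvE n (x : 'rV[RR]_n.+1) : tailv x = rsubmx (x : 'rV[RR]_(1 + n)).
Proof. by apply/rowP => k; rewrite !mxE; congr (x _ _); apply: val_inj. Qed.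
Lemma tailv_cont n : continuous (@tailv n).
Proof.
have -> : @tailv n = (rsubmx : 'rV[RR]_(1 + n) -> 'rV[RR]_n).
  by apply/funext => x; rewrite tailvE.
exact: (@continuous_rsubmx RR 1 1 n).
Qed.
Lemma tail_in n (x : cube n.+1) : tailv (val x) \in cube_set n.
Proof.
apply/mem_set => k; rewrite mxE; case: x => y /= /set_mem; exact.
Qed.
Definition tailc n (x : cube n.+1) : cube n := exist (fun v => v \in cube_set n) (tailv (val x)) (tail_in x).
Lemma tailc_cont n : continuous (@tailc n).
Proof.
apply: continuous_comp_initial.
have -> : (set_val \o @tailc n) = (@tailv n \o (set_val : cube n.+1 -> _)) by [].
move=> x; apply: continuous_comp; first exact: initial_continuous.
exact: tailv_cont.
Qed.
Definition timec (p : RR -> RR) n (x : cube n.+1) : set_type I01 :=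
  exist (fun v => v \in I01) (clamp01 (p (val x ord0 ord0))) (clamp01_in _).
Lemma timec_cont p n : continuous p -> continuous (@timec p n).
Proof.
move=> cp; apply: continuous_comp_initial.
have -> : (set_val \o @timec p n) =
   (clamp01 \o p \o (fun v : 'rV[RR]_n.+1 => v ord0 ord0) \o (set_val : cube n.+1 -> _)) by [].
move=> x; apply: continuous_comp; first exact: initial_continuous.
apply: continuous_comp; first exact: coord_continuous.
apply: continuous_comp; first exact: cp.
exact: clamp01_cont.
Qed.
Lemma pair_cont (Z A B : topologicalType) (a : Z -> A) (b : Z -> B) :
  continuous a -> continuous b -> continuous (fun z => (a z, b z)).
Proof. by move=> ca cb z; apply: cvg_pair; [exact: ca|exact: cb]. Qed.
Definition prism (p : RR -> RR) n (X Y : topologicalType) (H : X * set_type I01 -> Y)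
  (T : cubemap n X) : cubemap n.+1 Y := fun x => H (T (tailc x), timec p x).
Lemma prism_cont p n (X Y : topologicalType) (H : X * set_type I01 -> Y) (T : cubemap n X) :
  continuous p -> continuous H -> continuous T -> continuous (prism p H T).
Proof.
move=> cp cH cT x; rewrite /prism.
apply: (@continuous_comp _ _ _ (fun z => (T (tailc z), timec p z)) H); last exact: cH.
apply: pair_cont; last exact: timec_cont.
by move=> z; apply: continuous_comp; [exact: tailc_cont|exact: cT].
Qed.

Lemma tailv_ins0 n t (v : 'rV[RR]_n) : tailv (ins_row ord0 t v) = v.
Proof. by apply/rowP => k; rewrite !mxE liftK. Qed.

Lemma head_ins0 n t (v : 'rV[RR]_n) : ins_row ord0 t v ord0 ord0 = t.
Proof. by rewrite mxE unlift_none. Qed.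

Lemma tailv_insS n (j : 'I_n.+1) t (v : 'rV[RR]_n.+1) :
  tailv (ins_row (lift ord0 j) t v) = ins_row j t (tailv v).
Proof.
apply/rowP => k; rewrite !mxE.
case: (unliftP j k) => [k'|] ->.
  have -> : lift ord0 (lift j k') = lift (lift ord0 j) (lift ord0 k').
    apply: val_inj => /=; rewrite /bump /= !add1n ltnS; lia.
  by rewrite liftK mxE.
by rewrite unlift_none.
Qed.

Lemma head_insS n (j : 'I_n.+1) t (v : 'rV[RR]_n.+1) :
  ins_row (lift ord0 j) t v ord0 ord0 = v ord0 ord0.
Proof.
rewrite mxE; case: (unliftP (lift ord0 j) ord0) => [k' e|e].
  congr (v _ _); apply: val_inj; move: e => /(congr1 val) /=.
  rewrite /bump /=; lia.
by move: e => /(congr1 val).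
Qed.

Lemma clamp01_in_eq t v : clamp01 t = v -> v \in I01.
Proof. by move=> <-; exact: clamp01_in. Qed.

Lemma face_prism0 (L : nat) n (X Y : topologicalType) (H : X * set_type I01 -> Y)
  (p : RR -> RR) (T : cubemap n X) (i : 'I_L.+1) (h : X -> Y) (v : RR) :
  clamp01 (p (i%:R / L%:R)) = v ->
  (forall x t, val t = v -> H (x, t) = h x) ->
  face (prism p H T) i ord0 = h \o T.
Proof.
move=> ev hH; apply/funext => x; rewrite /face /prism /=.
rewrite -(hH (T x) (exist (fun v => v \in I01) v (clamp01_in_eq ev))).
  congr (H (T _, _)); apply: val_inj => /=.
    by rewrite tailv_ins0.
  by rewrite head_ins0.
by [].
Qed.

Lemma face_prismS (L : nat) n (X Y : topologicalType) (H : X * set_type I01 -> Y)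
  (p : RR -> RR) (T : cubemap n.+1 X) (i : 'I_L.+1) (j : 'I_n.+1) :
  face (prism p H T) i (lift ord0 j) = prism p H (face T i j).
Proof.
apply/funext => x; rewrite /face /prism /=.
congr (H (T _, _)); apply: val_inj => /=.
  by rewrite tailv_insS.
by rewrite head_insS.
Qed.
Lemma fsbig_list (Rg : comPzRingType) (T : choiceType) (A : set T) (F : T -> Rg) (s : seq T) :
  uniq s -> (forall x, A x -> F x != 0 -> x \in s) ->
  \sum_(x \in A) F x = \sum_(x <- s) (if x \in A then F x else 0).
Proof.
move=> us sA; rewrite fsbig_mkcond (fsbigTE [fset x | x in s]%fset).
  apply: perm_big; rewrite uniq_perm ?fset_uniq // => i; rewrite !inE.
  by [].
move=> i; rewrite inE /patch; case: ifPn => // /set_mem Ai Ni.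
by apply/eqP; apply: contraNT Ni => /(sA _ Ai).
Qed.

Lemma sum_pick (Rg : comPzRingType) (T : eqType) (s : seq T) (a : Rg) (q : T) (G : T -> Rg) :
  uniq s -> q \in s -> \sum_(x <- s) (a *+ (q == x)) * G x = a * G q.
Proof.
move=> us qs; rewrite (bigD1_seq q) //= eqxx mulr1n big1 ?addr0 // => x /negPf.
by rewrite eq_sym => ->; rewrite mulr0n mul0r.
Qed.

Lemma sum_push0 (Rg : comPzRingType) (T A B : eqType) (s : seq T) a b
  (w : T -> 'I_a -> 'I_b -> Rg)
  (e : T -> 'I_a -> 'I_b -> A) (Q : A -> B) (y : B) :
  (forall z, \sum_(x <- s) \sum_(j < a) \sum_(i < b) w x j i *+ (e x j i == z) = 0) ->
  \sum_(x <- s) \sum_(j < a) \sum_(i < b) w x j i *+ (Q (e x j i) == y) = 0.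
Proof.
move=> h0.
pose u := undup (flatten [seq flatten [seq [seq e x j i | i <- enum 'I_b] | j <- enum 'I_a] | x <- s]).
have uu : uniq u by exact: undup_uniq.
have inu : forall x j i, x \in s -> e x j i \in u.
  move=> x j i xs; rewrite mem_undup; apply/flatten_mapP; exists x => //.
  apply/flatten_mapP; exists j; rewrite ?mem_enum //.
  by apply/map_f; rewrite mem_enum.
transitivity (\sum_(z <- u) (\sum_(x <- s) \sum_(j < a) \sum_(i < b) w x j i *+ (e x j i == z)) *+ (Q z == y)).
  symmetry.
  under eq_bigr => z _ do rewrite -sumrMnl; rewrite exchange_big /=.
  apply: eq_big_seq => x xs.
  under eq_bigr => z _ do rewrite -sumrMnl; rewrite exchange_big /=.
  apply: eq_bigr => j _.
  under eq_bigr => z _ do rewrite -sumrMnl; rewrite exchange_big /=.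
  apply: eq_bigr => i _.
  rewrite (bigD1_seq (e x j i)) ?inu //= eqxx mulr1n big1 ?addr0 // => z /negPf.
  by rewrite eq_sym => ->; rewrite mulr0n mul0rn.
by rewrite big1 // => z _; rewrite h0 mul0rn.
Qed.

Lemma supp_in (Rg : pzRingType) n X (c : cubemap n X -> Rg) T : (T \in supp c) = (c T != 0).
Proof. by apply/idP/idP => [/set_mem //|h]; apply/mem_set. Qed.

Lemma bd_seq (Rg : comPzRingType) L (m : 'I_L.+1 -> Rg) n X (c : cubemap n.+1 X -> Rg)
  (t : seq (cubemap n.+1 X)) S :
  uniq t -> (forall T, c T != 0 -> T \in t) ->
  bd m c S = \sum_(T <- t) c T * bd_cube m T S.
Proof.
move=> ut ht; rewrite /bd (fsbig_list (s:=t) ut); last by move=> T /= cT _; exact: ht.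
apply: eq_bigr => T _; rewrite supp_in; case: eqP => [->|//].
by rewrite mul0r.
Qed.

Lemma push_seq (Rg : comPzRingType) n (X Y : topologicalType) (f : X -> Y)
  (c : cubemap n X -> Rg) (t : seq (cubemap n X)) S :
  uniq t -> (forall T, c T != 0 -> T \in t) ->
  push f c S = \sum_(T <- t) c T *+ ((f \o T : cubemap n Y) == S).
Proof.
move=> ut ht; rewrite /push (fsbig_list (s:=t) ut); last by move=> T /= [cT _] _; exact: ht.
apply: eq_bigr => T _; case: eqP => [e|ne].
  case: (boolP (c T == 0)) => [/eqP ->|cT]; first by case: ifP.
  by rewrite ifT //; apply/mem_set; split.
by rewrite ifF //; apply/negbTE; apply/negP => /set_mem [].
Qed.

Definition Rterm (Rg : pzRingType) L (m : 'I_L.+1 -> Rg) n Y (P : cubemap n.+1 Y) (S : cubemap n Y) :=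
  \sum_(j < n) \sum_(i < L.+1) ((-1) ^+ (lift ord0 j) * m i) *+ (face P i (lift ord0 j) == S).

Lemma bd_cube_split (Rg : pzRingType) L (m : 'I_L.+1 -> Rg) n Y (P : cubemap n.+1 Y) S :
  bd_cube m P S = \sum_(i < L.+1) m i *+ (face P i ord0 == S) + Rterm m P S.
Proof.
rewrite /bd_cube big_ord_recl /=; congr (_ + _).
by apply: eq_bigr => i _; rewrite expr0 mul1r.
Qed.

Lemma Rterm_cycle (Rg : comPzRingType) L (m : 'I_L.+1 -> Rg) n (X Y : topologicalType)
  (H : X * set_type I01 -> Y) p (c : cubemap n X -> Rg) (s : seq (cubemap n X)) S :
  uniq s -> (forall T, c T != 0 -> T \in s) -> is_cycle m c ->
  \sum_(T <- s) c T * Rterm m (prism p H T) S = 0.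
Proof.
case: n c s S => [|n] c s S us hs cyc.
  by rewrite big1 // => T _; rewrite /Rterm big_ord0 mulr0.
have -> : \sum_(T <- s) c T * Rterm m (prism p H T) S =
  - \sum_(T <- s) \sum_(j < n.+1) \sum_(i < L.+1)
      (c T * ((-1) ^+ j * m i)) *+ (prism p H (face T i j) == S).
  rewrite -sumrN; apply: eq_bigr => T _; rewrite /Rterm mulr_sumr -sumrN.
  apply: eq_bigr => j _; rewrite mulr_sumr -sumrN; apply: eq_bigr => i _.
  by rewrite face_prismS lift0 exprS mulN1r mulNr mulNrn mulrN mulrnAr.
apply/eqP; rewrite oppr_eq0; apply/eqP.
apply: (@sum_push0 _ _ _ _ s _ _ _ (fun T j i => face T i j) (prism p H)).
move=> z; have := cyc z; rewrite (bd_seq _ _ us hs) => h; apply: (etrans _ h).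
apply: eq_bigr => T _; rewrite /bd_cube mulr_sumr; apply: eq_bigr => j _.
by rewrite mulr_sumr; apply: eq_bigr => i _; rewrite mulrnAr.
Qed.

Lemma nat_dist1 (a b : nat) : a != b -> 1 <= `|a%:R - b%:R : RR|.
Proof.
move=> ne; case: (ltngtP a b) => h; last by rewrite h eqxx in ne.
  have : (a.+1)%:R <= b%:R :> RR by rewrite ler_nat.
  rewrite -addn1 natrD => hb.
  rewrite -normrN opprB; apply: le_trans (ler_norm _); lra.
have : (b.+1)%:R <= a%:R :> RR by rewrite ler_nat.
rewrite -addn1 natrD => hb.
apply: le_trans (ler_norm _); lra.
Qed.
Lemma clamp_neg (x : RR) : 1 <= x -> Num.min 1 (Num.max 0 (1 - x)) = 0.
Proof. by move=> h; rewrite max_l ?min_r ?ler01 //; lra. Qed.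

Definition pk (L k : nat) (t : RR) : RR := 1 - `|L%:R * t - k%:R|.
Lemma pk_cont L k : continuous (pk L k).
Proof.
move=> x.
have -> : pk L k = ((fun=> 1 : RR^o) - (Num.norm \o ((fun t : RR => (L%:R * t : RR^o)) - (fun=> k%:R : RR^o)))).
  by apply/funext => t.
apply: (@continuousB RR RR^o RR); first exact: cvg_cst.
apply: continuous_comp; last exact: (@norm_continuous _ RR^o).
apply: (@continuousB RR RR^o RR); last exact: cvg_cst.
exact: (@mulrl_continuous RR).
Qed.
Lemma clamp_pk L (i k : 'I_L.+1) : clamp01 (pk L k (i%:R / L%:R)) = (i == k)%:R.
Proof.
rewrite /pk.
have -> : L%:R * (i%:R / L%:R) = i%:R :> RR.
  case: L i k => [|L] i k.
    by rewrite mul0r; case: i => [[|]] //.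
  by rewrite mulrC divfK // pnatr_eq0.
rewrite /clamp01; case: eqP => [->|/eqP ne].
  by rewrite subrr normr0 subr0 max_r ?ler01 // min_r.
by rewrite clamp_neg // nat_dist1.
Qed.

Lemma per_Tk (Rg : comPzRingType) L (m r : 'I_L.+1 -> Rg) n (X Y : topologicalType)
  (f g : X -> Y) (H : X * set_type I01 -> Y)
  (H0 : forall x t, val t = 0 -> H (x, t) = f x)
  (H1 : forall x t, val t = 1 -> H (x, t) = g x)
  (T : cubemap n X) (k : 'I_L.+1) (cT : Rg) S :
  (cT * r k) * (bd_cube m (prism (fun=> 0) H T) S - bd_cube m (prism (pk L k) H T) S)
  = (cT * (((f \o T : cubemap n Y) == S)%:R - ((g \o T : cubemap n Y) == S)%:R)) * (r k * m k)
    + (r k * (cT * Rterm m (prism (fun=> 0) H T) S) - r k * (cT * Rterm m (prism (pk L k) H T) S)).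
Proof.
rewrite !bd_cube_split.
have e0 : forall i : 'I_L.+1, face (prism (fun=> 0) H T) i ord0 = f \o T.
  move=> i; apply: (@face_prism0 L n X Y H (fun=> 0) T i f 0) => //.
  by rewrite /clamp01 max_r // min_r ?ler01.
have ek : forall i : 'I_L.+1, face (prism (pk L k) H T) i ord0 = (if i == k then g else f) \o T.
  move=> i; apply: (@face_prism0 L n X Y H (pk L k) T i _ ((i == k)%:R)); first exact: clamp_pk.
  by case: eqP => _ x t; [rewrite mulr1n; exact: H1|exact: H0].
under eq_bigr => i _ do rewrite e0.
under [X in _ - (X + _)]eq_bigr => i _ do rewrite ek.
set R0 := Rterm _ _ _; set Rk := Rterm _ _ _.
have hA : \sum_(i < L.+1) m i *+ ((f \o T : cubemap n Y) == S)
  - \sum_(i < L.+1) m i *+ (((if i == k then g else f) \o T : cubemap n Y) == S)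
  = m k * (((f \o T : cubemap n Y) == S)%:R - ((g \o T : cubemap n Y) == S)%:R).
  rewrite -sumrB (bigD1 k) //= eqxx big1 ?addr0.
    by rewrite mulrBr !mulr_natr.
  by move=> i /negPf ->; rewrite subrr.
have -> : \sum_(i < L.+1) m i *+ ((f \o T : cubemap n Y) == S) + R0 -
  (\sum_(i < L.+1) m i *+ (((if i == k then g else f) \o T : cubemap n Y) == S) + Rk)
  = m k * (((f \o T : cubemap n Y) == S)%:R - ((g \o T : cubemap n Y) == S)%:R) + (R0 - Rk).
  by rewrite -hA; ring.
ring.
Qed.

Lemma homotopy_if (Rg : comPzRingType) L (m r : 'I_L.+1 -> Rg) :
  \sum_(k < L.+1) r k * m k = 1 -> homotopy_axiom m.
Proof.
move=> hr X Y f g cf cg [H [cH [H0 H1]]] n c [fc cc] cyc.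
pose s : seq (cubemap n X) := fset_set (supp c).
have us : uniq s by exact: fset_uniq.
have hs : forall T, c T != 0 -> T \in s.
  by move=> T cT; rewrite /s in_fset_set // supp_in.
have hs' : forall T, T \in s -> supp c T.
  by move=> T; rewrite /s in_fset_set // => /set_mem.
pose d := fun S' : cubemap n.+1 Y => \sum_(T <- s) \sum_(k < L.+1)
   ((c T * r k) *+ (prism (fun=> 0) H T == S') - (c T * r k) *+ (prism (pk L k) H T == S')).
pose t := undup ([seq prism (fun=> 0) H T | T <- s] ++
   flatten [seq [seq prism (pk L k) H T | T <- s] | k : 'I_L.+1 <- enum 'I_L.+1]).
have ut : uniq t by exact: undup_uniq.
have t0 : forall T, T \in s -> prism (fun=> 0) H T \in t.
  by move=> T Ts; rewrite mem_undup mem_cat map_f.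
have tk : forall T (k : 'I_L.+1), T \in s -> prism (pk L k) H T \in t.
  move=> T k Ts; rewrite mem_undup mem_cat; apply/orP; right.
  by apply/flatten_mapP; exists k; rewrite ?mem_enum // map_f.
have ht : forall S', d S' != 0 -> S' \in t.
  move=> S'; apply: contraR => nt; apply/eqP; rewrite /d big1_seq // => T /andP [_ Ts].
  rewrite big1 // => k _.
  have -> : (prism (fun=> 0) H T == S') = false.
    by apply/negbTE; apply: contraNneq nt => <-; exact: t0.
  have -> : (prism (pk L k) H T == S') = false.
    by apply/negbTE; apply: contraNneq nt => <-; exact: tk.
  by rewrite !mulr0n subrr.
have cont : forall S', S' \in t -> continuous S'.
  move=> S'; rewrite mem_undup mem_cat => /orP [/mapP [T Ts ->]|/flatten_mapP [k _ /mapP [T Ts ->]]].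
    apply: prism_cont => //; last exact: cc (hs' _ Ts).
    exact: cst_continuous.
  apply: prism_cont => //; last exact: cc (hs' _ Ts).
  exact: pk_cont.
exists d; split.
  split.
    apply: (sub_finite_set _ (finite_seq t)) => S' /= dS.
    exact: ht.
  by move=> S' /= dS; apply: cont; exact: ht.
move=> S.
rewrite (push_seq f S us hs) (push_seq g S us hs) (bd_seq m S ut ht).
have E1 : \sum_(S' <- t) d S' * bd_cube m S' S =
  \sum_(T <- s) \sum_(k < L.+1) (c T * r k) *
     (bd_cube m (prism (fun=> 0) H T) S - bd_cube m (prism (pk L k) H T) S).
  rewrite /d; under eq_bigr => S' _ do rewrite mulr_suml.
  rewrite exchange_big /=; apply: eq_big_seq => T Ts.
  under eq_bigr => S' _ do rewrite mulr_suml.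
  rewrite exchange_big /=; apply: eq_bigr => k _.
  under eq_bigr => S' _ do rewrite mulrBl.
  by rewrite sumrB !sum_pick ?t0 ?tk // mulrBr.
rewrite E1; symmetry.
under eq_bigr => T _ do under eq_bigr => k _ do rewrite (per_Tk m r H0 H1).
under eq_bigr => T _ do rewrite big_split /= -mulr_sumr hr mulr1.
rewrite big_split /= [X in _ + X]exchange_big /=.
rewrite [X in _ + X]big1 ?addr0; first last.
  move=> k _; rewrite sumrB -!mulr_sumr.
  by rewrite !(Rterm_cycle _ _ _ us hs cyc) mulr0 subrr.
rewrite -sumrB; apply: eq_bigr => T _.
by rewrite mulrBr !mulr_natr.
Qed.

Lemma homotopy_only (Rg : comPzRingType) L (m : 'I_L.+1 -> Rg) :
  homotopy_axiom m -> exists r : 'I_L.+1 -> Rg, \sum_(k < L.+1) r k * m k = 1.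
Proof.
move=> ha.
case: (eqVneq (1 : Rg) 0) => [e10|n10].
  by exists (fun=> 0); rewrite big1 ?e10 // => k _; rewrite mul0r.
pose f : RR -> RR := fun=> 0.
pose g : RR -> RR := fun=> 1.
have pt_in : (0 : 'rV[RR]_0) \in cube_set 0 by apply/mem_set => -[].
pose pt : cube 0 := exist (fun v => v \in cube_set 0) 0 pt_in.
pose T0 : cubemap 0 RR := fun=> 0.
pose c : cubemap 0 RR -> Rg := fun T => (T == T0)%:R.
have hom : homotopic f g.
  exists (fun p : RR * set_type I01 => val p.2); split.
    move=> p; apply: continuous_comp; first exact: cvg_snd.
    exact: initial_continuous.
  by split => x t.
have suppc : forall T, c T != 0 -> T = T0.
  by move=> T; rewrite /c; have [//|ne] := eqVneq T T0; rewrite mulr0n eqxx.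
have chc : is_chain c.
  split.
    apply: (sub_finite_set _ (finite_seq [:: T0])) => T /= /suppc ->.
    by rewrite inE.
  by move=> T /= /suppc ->; exact: cst_continuous.
have [d [[fd cd] hd]] := ha RR RR f g (@cst_continuous _ _ _) (@cst_continuous _ _ _) hom 0 c chc I.
have := hd T0.
have hs0 : forall T, c T != 0 -> T \in [:: T0] by move=> T /suppc ->; rewrite inE.
pose s : seq (cubemap 1 RR) := fset_set (supp d).
have us : uniq s by exact: fset_uniq.
have hs : forall T, d T != 0 -> T \in s.
  by move=> T cT; rewrite /s in_fset_set // supp_in.
rewrite (push_seq f T0 _ hs0) // (push_seq g T0 _ hs0) // (bd_seq m T0 us hs).
rewrite !big_seq1 /c eqxx.

have -> : ((g \o T0 : cubemap 0 RR) == T0) = false.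
  apply/negbTE/eqP => /(congr1 (fun h : cubemap 0 RR => h pt)) /=.
  by move/eqP; rewrite /g oner_eq0.
rewrite /= !mulr1n mulr0n subr0 => h1.
exists (fun i => \sum_(T <- s) d T *+ (face T i ord0 == T0)).
rewrite h1; under eq_bigr => i _ do rewrite mulr_suml.
rewrite exchange_big /=; apply: eq_bigr => T _.
rewrite /bd_cube big_ord1 mulr_sumr; apply: eq_bigr => i _.
by rewrite expr0 mul1r mulrnAl mulrnAr.
Qed.

Lemma gcd_big_dvd n (m : 'I_n -> int) (k : 'I_n) : (\big[gcdz/0]_(i < n) m i %| m k)%Z.
Proof.
elim: n m k => [|n IH] m k; first by case: k.
rewrite big_ord_recl /=.
case: (unliftP ord0 k) => [k' ->|->]; last exact: dvdz_gcdl.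
apply: dvdz_trans (dvdz_gcdr _ _) _.
exact: (IH (fun i => m (lift ord0 i))).
Qed.

Lemma gcd_big_bezout n (m : 'I_n -> int) :
  exists r : 'I_n -> int, \sum_(k < n) r k * m k = \big[gcdz/0]_(i < n) m i.
Proof.
elim: n m => [|n IH] m; first by exists (fun=> 0); rewrite !big_ord0.
have [r hr] := IH (fun i => m (lift ord0 i)).
have [u [v huv]] := Bezoutz (m ord0) (\big[gcdz/0]_(i < n) m (lift ord0 i)).
exists (fun k => if unlift ord0 k is Some k' then v * r k' else u).
rewrite big_ord_recl [in RHS]big_ord_recl /= -huv -hr unlift_none.
congr (_ + _); rewrite mulr_sumr; apply: eq_bigr => k _.
by rewrite liftK mulrA.
Qed.

Lemma int_part L (m : 'I_L.+1 -> int) :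
  (exists r : 'I_L.+1 -> int, \sum_(k < L.+1) r k * m k = 1) <-> \big[gcdz/0]_(k < L.+1) m k = 1.
Proof.
split.
  move=> [r hr].
  have hd : (\big[gcdz/0]_(k < L.+1) m k %| \sum_(k < L.+1) r k * m k)%Z.
    apply: rpred_sum => k _; apply: dvdz_mull; exact: gcd_big_dvd.
  rewrite hr dvdz1 in hd.
  have : (0 <= \big[gcdz/0]_(k < L.+1) m k).
    by rewrite big_ord_recl /= /gcdz.
  move: hd; set G := \big[gcdz/0]__ _.
  by case: G => [g|g] //= /eqP ->.
move=> h; have [r hr] := gcd_big_bezout m; exists r; by rewrite hr.
Qed.

Theorem mainTheorem4 :
  (forall (Rg : comPzRingType) (L : nat) (m : 'I_L.+1 -> Rg),
      homotopy_axiom m <->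
      exists r : 'I_L.+1 -> Rg, \sum_(k < L.+1) r k * m k = 1) /\
  (forall (L : nat) (m : 'I_L.+1 -> int),
      homotopy_axiom m <-> \big[gcdz/0]_(k < L.+1) m k = 1).
Proof.
have P1 : forall (Rg : comPzRingType) (L : nat) (m : 'I_L.+1 -> Rg),
    homotopy_axiom m <-> exists r : 'I_L.+1 -> Rg, \sum_(k < L.+1) r k * m k = 1.
  move=> Rg L m; split; first exact: homotopy_only.
  by move=> [r hr]; exact: (homotopy_if hr).
split; first exact: P1.
move=> L m; apply: (iff_trans (P1 _ _ m)); exact: int_part.
Qed.
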